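(* Let $\mathcal{A}\in\mathbb{R}^{d_1\times\cdots\times d_k}$ be an order-$k$ real tensor that is $\mathbf{0}_{[k]}$-OD. Then for every partition $\pi\in\mathcal{P}_{[k]}$ with $\pi\ne\mathbf{1}_{[k]}$, \[ \|\mathrm{Unfold}_\pi(\mathcal{A})\|_\sigma=\|\mathcal{A}\|_\sigma . \]
   Context: $\mathcal{P}_{[k]}$ is the set of partitions of $[k]$; $\mathbf{0}_{[k]}=\{\{1\},\dots,\{k\}\}$, $\mathbf{1}_{[k]}=\{[k]\}$. $\mathcal{A}$ is $\mathbf{0}_{[k]}$-OD if $\mathcal{A}=\sum_{n=1}^r\lambda_n\mathbf{a}^{(n)}_1\otimes\cdots\otimes\mathbf{a}^{(n)}_k$ with $\lambda_1\ge\cdots\ge\lambda_r\ge0$, $\mathbf{a}^{(n)}_i\in\mathbb{R}^{d_i}$, and $\langle\mathbf{a}^{(n)}_i,\mathbf{a}^{(m)}_i\rangle=\delta_{nm}$ for all $i\in[k]$, $n,m\in[r]$. For a real tensor $\mathcal{T}\in\mathbb{R}^{e_1\times\cdots\times e_m}$, $\|\mathcal{T}\|_\sigma=\sup\{\sum t_{i_1\dots i_m}x^{(1)}_{i_1}\cdots x^{(m)}_{i_m}:\ \|\mathbf{x}_n\|_2=1\}$. Unfolding: for $\pi=\{B_1,\dots,B_\ell\}$, $\mathrm{Unfold}_\pi(\mathcal{A})$ is the order-$\ell$ tensor of dimensions $(\prod_{j\in B_1}d_j,\dots,\prod_{j\in B_\ell}d_j)$ whose entry at $(m_1,\dots,m_\ell)$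 is $a_{i_1\dots i_k}$, where $m_j$ corresponds to $(i_r)_{r\in B_j}$ under a fixed bijection $\prod_{r\in B_j}[d_r]\to[\prod_{r\in B_j}d_r]$. *)

(* Defs.v *)
From HB Require Import structures.
From mathcomp Require Import all_boot all_order all_algebra.
From mathcomp Require Import reals.
Set Implicit Arguments. Unset Strict Implicit. Unset Printing Implicit Defensive.
Import Order.TTheory GRing.Theory Num.Theory.
Local Open Scope ring_scope.

Definition midx (m : nat) (e : 'I_m -> nat) := {dffun forall n : 'I_m, 'I_(e n)}.

Definition tensor (R : realType) (m : nat) (e : 'I_m -> nat) := midx e -> R.

Definition spectral_norm (R : realType) (m : nat) (e : 'I_m -> nat)
  (T : tensor R e) : R :=
  sup (fun s : R => exists x : forall n : 'I_m, 'I_(e n) -> R,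
         (forall n : 'I_m, \sum_(t < e n) x n t ^+ 2 = 1) /\
         s = \sum_(idx : midx e) T idx * \prod_(n < m) x n (idx n)).

Definition OD0 (R : realType) (k : nat) (d : 'I_k -> nat) (A : tensor R d) : Prop :=
  exists (r : nat) (lam : 'I_r -> R) (a : 'I_r -> forall i : 'I_k, 'I_(d i) -> R),
    [/\ (forall n m : 'I_r, (n <= m)%N -> lam m <= lam n),
        (forall n : 'I_r, 0 <= lam n),
        (forall (i : 'I_k) (n m : 'I_r),
            \sum_(t < d i) a n i t * a m i t = (n == m)%:R) &
        (forall idx : midx d, A idx = \sum_(n < r) lam n * \prod_(i < k) a n i (idx i))].

(* Partitions of [k] (as finite sets of nonempty, pairwise disjoint blocks
   covering [set: 'I_k]); 1_[k] is [set [set: 'I_k]]. *)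
Definition is_partition (k : nat) (pi : {set {set 'I_k}}) : bool :=
  finset.partition pi [set: 'I_k].

Definition one_part (k : nat) : {set {set 'I_k}} := [set [set: 'I_k]].

Definition block (k : nat) (pi : {set {set 'I_k}}) (j : nat) : {set 'I_k} :=
  nth set0 (enum pi) j.

Definition unfold_dim (k : nat) (d : 'I_k -> nat) (pi : {set {set 'I_k}})
  (j : 'I_#|pi|) : nat := \prod_(r in block pi j) d r.

(* Fixed bijection prod_{r in B_j} [d_r] -> [prod_{r in B_j} d_r]: mixed-radix
   encoding of (i_r)_{r in B_j}, ordered by increasing r (0-based). *)
Definition unfold_code (k : nat) (d : 'I_k -> nat) (B : {set 'I_k})
  (idx : midx d) : nat :=
  \sum_(r in B) (idx r : nat) * \prod_(s in B | (s < r)%N) d s.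

(* Unfold_pi(A): entry at (m_1..m_l) is a_{i_1..i_k} for the (unique, since the
   codes are bijective) multi-index i whose block codes are the m_j. *)
Definition unfold (R : realType) (k : nat) (d : 'I_k -> nat)
  (pi : {set {set 'I_k}}) (A : tensor R d) : tensor R (@unfold_dim k d pi) :=
  fun mi => \sum_(idx : midx d |
                  [forall j : 'I_#|pi|, @unfold_code k d (block pi j) idx == mi j])
              A idx.

(* Main.v *)
Require Import Defs.
From HB Require Import structures.
From mathcomp Require Import all_boot all_order all_algebra reals.
Set Implicit Arguments. Unset Strict Implicit. Unset Printing Implicit Defensive.
Import Order.TTheory GRing.Theory Num.Theory.
Local Open Scope ring_scope.

Definition restr k (d : 'I_k -> nat) (z : midx d) (S : {set 'I_k}) (p : midx d) : midx d :=
  [ffun i => if i \in S then p i else z i].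

Definition inP k (d : 'I_k -> nat) (z : midx d) (S : {set 'I_k}) (p : midx d) : bool :=
  [forall i, (i \notin S) ==> (p i == z i)].

Lemma restrE k (d : 'I_k -> nat) (z : midx d) S p i :
  restr z S p i = if i \in S then p i else z i.
Proof. by rewrite /restr ffunE. Qed.

Lemma inP_restr k (d : 'I_k -> nat) (z : midx d) S p : inP z S (restr z S p).
Proof. by apply/forallP => i; apply/implyP => /negPf hi; rewrite restrE hi. Qed.

Lemma restr_id k (d : 'I_k -> nat) (z : midx d) S p : inP z S p -> restr z S p = p.
Proof.
move/forallP => h; apply/ffunP => i; rewrite restrE.
by case: ifP => // /negbT hi; move: (h i); rewrite hi /= => /eqP ->.
Qed.

Lemma restr_restr k (d : 'I_k -> nat) (z : midx d) (S T : {set 'I_k}) p :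
  S \subset T -> restr z S (restr z T p) = restr z S p.
Proof.
move/subsetP => h; apply/ffunP => i; rewrite !restrE.
by case: ifP => // /h ->.
Qed.

Lemma split_sum (R : pzRingType) k (d : 'I_k -> nat) (z : midx d) (S T : {set 'I_k}) (F G : midx d -> R) :
  [disjoint S & T] ->
  (forall p, F p = F (restr z S p)) -> (forall p, G p = G (restr z T p)) ->
  \sum_(p | inP z (S :|: T) p) F p * G p =
  (\sum_(p | inP z S p) F p) * (\sum_(q | inP z T q) G q).
Proof.
move=> dST hF hG.
have dis i : i \in T -> i \in S = false.
  by move=> hT; move: dST; rewrite disjoint_sym => /disjointFr /(_ hT).
apply/esym; rewrite big_distrl /=; under eq_bigr do rewrite big_distrr /=.
rewrite pair_big /=.
pose mer (u : midx d * midx d) : midx d := [ffun i => if i \in S then u.1 i else u.2 i].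
rewrite (reindex_onto (fun p => (restr z S p, restr z T p)) mer) /=.
  apply: eq_big => p.
    apply/idP/idP.
      case/andP => _ /eqP <-; apply/forallP => i; apply/implyP.
      rewrite in_setU negb_or => /andP [hS hT].
      by rewrite /mer /restr !ffunE (negPf hS) (negPf hT).
    move=> hp; rewrite !inP_restr /=; apply/eqP/ffunP => i.
    rewrite /mer /restr !ffunE; case: ifP => [hS|hS]; first by rewrite hS.
    case: ifP => // hT; move/forallP: hp => /(_ i); rewrite in_setU hS hT /=.
    by move/eqP.
  move=> _; by rewrite -hF -hG.
case=> p q /= /andP [hp hq]; congr pair.
  rewrite -[RHS](restr_id hp); apply/ffunP => i; rewrite /mer /restr !ffunE.
  by case: (i \in S).
rewrite -[RHS](restr_id hq); apply/ffunP => i; rewrite /mer /restr !ffunE.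
by case: ifP => // hT; rewrite dis.
Qed.

Lemma inP0 k (d : 'I_k -> nat) (z : midx d) p : inP z set0 p = (p == z).
Proof.
apply/forallP/eqP => [h|->]; last by move=> i; rewrite eqxx implybT.
by apply/ffunP => i; move: (h i); rewrite in_set0 /= => /eqP.
Qed.

Lemma prod_sum (R : comPzRingType) k (d : 'I_k -> nat) (z : midx d) (J : finType)
  (B : J -> {set 'I_k}) (F : J -> midx d -> R) (s : seq J) :
  uniq s -> (forall j1 j2, j1 != j2 -> [disjoint B j1 & B j2]) ->
  (forall j p, F j p = F j (restr z (B j) p)) ->
  \sum_(p | inP z (\bigcup_(j <- s) B j) p) \prod_(j <- s) F j p =
  \prod_(j <- s) \sum_(p | inP z (B j) p) F j p.
Proof.
move=> + dis hF; elim: s => [|j s IH] /=.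
  rewrite big_nil big_nil (big_pred1 z) ?big_nil // => p.
  by rewrite inP0.
case/andP => js us; rewrite big_cons big_cons.
under eq_bigr do rewrite big_cons.
rewrite split_sum; first by rewrite IH.
- rewrite bigcup_seq; apply: bigcup_disjoint => i his.
  by apply: dis; apply: contraNneq js => ->.
- exact: hF.
move=> p; apply: eq_big_seq => i his; rewrite hF [RHS]hF restr_restr //.
by rewrite bigcup_seq; apply: bigcup_sup.
Qed.

Lemma sum_single (R : pzRingType) k (d : 'I_k -> nat) (z : midx d) i (g : 'I_(d i) -> R) :
  \sum_(p | inP z [set i] p) g (p i) = \sum_t g t.
Proof.
pose h (t : 'I_(d i)) : midx d := [ffun j => if j == i then insubd (z j) (val t) else z j].
have hi t : h t i = t by rewrite /h ffunE eqxx; apply: val_inj; rewrite val_insubd ltn_ord.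
rewrite (reindex_onto h (fun p => p i)) /=.
  apply: eq_big => [t|t _]; last by rewrite hi.
  rewrite hi eqxx andbT; apply/forallP => j; apply/implyP; rewrite in_set1 => /negPf hj.
  by rewrite /h ffunE hj.
move=> p /forallP hp; apply/ffunP => j; rewrite /h ffunE.
case: eqP => [->|/eqP hj].
  by apply: val_inj; rewrite val_insubd ltn_ord.
by move: (hp j); rewrite in_set1 hj /= => /eqP.
Qed.

Lemma sum_prod_block (R : comPzRingType) k (d : 'I_k -> nat) (z : midx d) (B : {set 'I_k})
  (g : forall i, 'I_(d i) -> R) :
  \sum_(p | inP z B p) \prod_(i in B) g i (p i) = \prod_(i in B) \sum_t g i t.
Proof.
have eB : \bigcup_(i <- enum B) [set i] = B.
  apply/setP => x; rewrite bigcup_seq; apply/bigcupP/idP => [[i]|hx].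
    by rewrite mem_enum => hi; rewrite in_set1 => /eqP ->.
  by exists x; rewrite ?mem_enum ?set11.
have := @prod_sum R k d z _ (fun i => [set i]) (fun i p => g i (p i)) (enum B) (enum_uniq _).
rewrite eB => H.
transitivity (\sum_(p | inP z B p) \prod_(i <- enum B) g i (p i)).
  by apply: eq_bigr => p _; rewrite big_enum.
rewrite H.
- by rewrite big_enum; apply: eq_bigr => i _; rewrite sum_single.
- by move=> i j hij; rewrite disjoints1 in_set1.
by move=> i p; rewrite restrE set11.
Qed.

From mathcomp Require Import zify.

Lemma code_split k (d : 'I_k -> nat) (B : {set 'I_k}) m (idx : midx d) :
  m \in B -> (forall r, r \in B -> (r <= m)%N) ->
  unfold_code B idx = (unfold_code (B :\ m) idx + idx m * \prod_(s in B :\ m) d s)%N.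
Proof.
move=> mB mmax; rewrite /unfold_code (bigD1 m) //= addnC; congr (_ + _)%N.
  apply: eq_big => [r|r /andP [rB rm]]; first by rewrite in_setD1 andbC.
  congr (_ * _)%N; apply: eq_bigl => s; rewrite in_setD1.
  apply/idP/idP => [/andP[-> sr]|/andP[/andP[_ ->] ->]] //; rewrite sr !andbT.
  by apply: contraTneq sr => ->; rewrite -leqNgt mmax.
congr (_ * _)%N; apply: eq_bigl => s; rewrite in_setD1.
apply/idP/idP => [/andP[sB sm]|/andP[sm sB]]; rewrite sB ?andbT.
  by apply: contraTneq sm => ->; rewrite ltnn.
rewrite ltn_neqAle mmax // andbT; exact: sm.
Qed.

Lemma code_props k (d : 'I_k -> nat) (n : nat) (B : {set 'I_k}) :
  #|B| = n ->
  (forall idx : midx d, (unfold_code B idx < \prod_(r in B) d r)%N) /\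
  (forall p q : midx d, unfold_code B p = unfold_code B q -> forall r, r \in B -> p r = q r).
Proof.
elim: n B => [|n IH] B hB.
  have -> := cards0_eq hB; split.
    by move=> idx; rewrite /unfold_code !big_set0.
  by move=> p q _ r; rewrite in_set0.
have [i0 hi0] : exists i0, i0 \in B.
  by apply/set0Pn; rewrite -cards_eq0 hB.
case: (@arg_maxnP _ i0 (mem B) (fun r => val r) hi0) => m mB0 mmax.
have mB : m \in B := mB0.
have mmax' : forall r, r \in B -> (r <= m)%N by move=> r /mmax.
have hB' : #|B :\ m| = n by move: hB; rewrite (cardsD1 m) mB; case.
have [lt' inj'] := IH (B :\ m) hB'.
have eP : (\prod_(r in B) d r = d m * \prod_(s in B :\ m) d s)%N.
  rewrite (bigD1 m) //=; congr (_ * _)%N; apply: eq_bigl => s.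
  by rewrite in_setD1 andbC.
split.
  move=> idx; rewrite (code_split idx mB mmax') eP.
  have := lt' idx; have := ltn_ord (idx m).
  set N := (\prod_(s in B :\ m) d s)%N; set c := unfold_code _ _; move: (idx m : nat) => i.
  nia.
move=> p q; rewrite (code_split p mB mmax') (code_split q mB mmax') => e r rB.
have := lt' p; have := lt' q.
set N := (\prod_(s in B :\ m) d s)%N.
set cp := unfold_code _ p; set cq := unfold_code _ q => hq hp.
have eim : (p m : nat) = q m by nia.
have ec : cp = cq by nia.
case: (r =P m) => [->|rm]; first exact: val_inj.
by apply: inj' ec _ _; rewrite in_setD1 rB andbT; apply/eqP.
Qed.

From mathcomp Require Import ring lra.
From mathcomp Require classical_sets.

Lemma bessel (R : realFieldType) (I : finType) (Q : pred I) r (e : 'I_r -> I -> R) (u : I -> R) :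
  (forall n m, \sum_(p | Q p) e n p * e m p = (n == m)%:R) ->
  \sum_(n < r) (\sum_(p | Q p) e n p * u p) ^+ 2 <= \sum_(p | Q p) u p ^+ 2.
Proof.
move=> orth; set c := fun n => \sum_(p | Q p) e n p * u p.
pose v p := \sum_(n < r) c n * e n p.
have h1 : \sum_(p | Q p) v p * u p = \sum_(n < r) c n ^+ 2.
  rewrite /v; under eq_bigr do rewrite big_distrl /=.
  rewrite exchange_big /=; apply: eq_bigr => n _.
  by rewrite expr2 /c big_distrr /=; apply: eq_bigr => p _; ring.
have h2 : \sum_(p | Q p) v p * v p = \sum_(n < r) c n ^+ 2.
  rewrite /v; under eq_bigr do rewrite big_distrl /=.
  rewrite exchange_big /=; apply: eq_bigr => n _.
  transitivity (c n * \sum_(m < r) c m * (n == m)%:R).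
    rewrite big_distrr /=; under eq_bigr do rewrite big_distrr /=.
    rewrite exchange_big /=; apply: eq_bigr => m _.
    by rewrite -orth big_distrr /= big_distrr /=; apply: eq_bigr => p _; ring.
  rewrite (bigD1 n) //= eqxx big1 ?addr0 ?mulr1 ?expr2 // => m /negPf.
  by rewrite eq_sym => ->; rewrite mulr0.
have h3 : 0 <= \sum_(p | Q p) (u p - v p) ^+ 2 by apply: sumr_ge0 => p _; apply: sqr_ge0.
have e3 : \sum_(p | Q p) (u p - v p) ^+ 2 =
  \sum_(p | Q p) u p ^+ 2 - 2 * \sum_(p | Q p) v p * u p + \sum_(p | Q p) v p * v p.
  rewrite big_distrr /= -sumrB -big_split /=; apply: eq_bigr => p _; ring.
move: h3; rewrite e3 h1 h2; lra.
Qed.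

Lemma sum_fiber (R : pzRingType) (I J : finType) (Q : pred I) (c : I -> J) (F : I -> R) (G : R -> R) :
  {in Q &, injective c} -> G 0 = 0 ->
  \sum_j G (\sum_(p | Q p && (c p == j)) F p) = \sum_(p | Q p) G (F p).
Proof.
move=> inj G0; rewrite [RHS](partition_big c predT) //=; apply: eq_bigr => j _.
case: (pickP (fun p => Q p && (c p == j))) => [p0 /andP [hq /eqP hc]|none].
  have eqp : (fun p => Q p && (c p == j)) =1 pred1 p0.
    move=> p /=; apply/andP/eqP => [[hp /eqP e]|->]; last by rewrite hq hc.
    by apply: inj; rewrite // e hc.
  by rewrite (big_pred1 p0 eqp) (big_pred1 p0 eqp).
by rewrite !big_pred0.
Qed.

Lemma sup_eq (R : realType) (E : R -> Prop) L : E L -> (forall s, E s -> s <= L) -> sup E = L.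
Proof.
move=> EL ub; apply/le_anti/andP; split.
  by apply: ge_sup; [exists L | move=> s /ub].
by apply: ub_le_sup => //; exists L => s /ub.
Qed.

Lemma block_in k (pi : {set {set 'I_k}}) (j : 'I_#|pi|) : block pi j \in pi.
Proof. by rewrite /block -mem_enum mem_nth // -cardE. Qed.

Lemma block_disj k (pi : {set {set 'I_k}}) : is_partition pi ->
  forall j1 j2 : 'I_#|pi|, j1 != j2 -> [disjoint block pi j1 & block pi j2].
Proof.
case/and3P => _ /finset.trivIsetP tI _ j1 j2 hj; apply: tI; rewrite ?block_in //.
by rewrite /block nth_uniq ?enum_uniq // -?cardE.
Qed.

Lemma block_ne0 k (pi : {set {set 'I_k}}) : is_partition pi ->
  forall j : 'I_#|pi|, block pi j != set0.
Proof.
case/and3P => _ _ h0 j; apply: contraNneq h0 => <-; exact: block_in.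
Qed.

Lemma block_cover k (pi : {set {set 'I_k}}) : is_partition pi ->
  forall i, exists j : 'I_#|pi|, i \in block pi j.
Proof.
case/and3P => /eqP cov _ _ i.
have : i \in cover pi by rewrite cov in_setT.
rewrite /cover => /finset.bigcupP [A Api iA].
have hA : (index A (enum pi) < #|pi|)%N by rewrite cardE index_mem mem_enum.
by exists (Ordinal hA); rewrite /block /= nth_index ?mem_enum.
Qed.

Lemma prod_blocks (R : comPzRingType) k (pi : {set {set 'I_k}}) (f : 'I_k -> R) :
  is_partition pi -> \prod_i f i = \prod_(j < #|pi|) \prod_(i in block pi j) f i.
Proof.
move=> hpi; have /and3P [/eqP cov tI _] := hpi.
transitivity (\prod_(i in cover pi) f i).
  by apply: eq_bigl => i; rewrite cov in_setT.
rewrite big_trivIset // -big_enum /= (big_nth set0) cardE big_mkord.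
by apply: eq_bigr.
Qed.

Lemma cover_all k (d : 'I_k -> nat) (z : midx d) (pi : {set {set 'I_k}}) p :
  is_partition pi -> inP z (\bigcup_(j < #|pi|) block pi j) p.
Proof.
move=> hpi; apply/forallP => i; apply/implyP.
by case: (block_cover hpi i) => j ij; case/negP; apply/finset.bigcupP; exists j.
Qed.

Definition codeo k (d : 'I_k -> nat) (pi : {set {set 'I_k}}) (j : 'I_#|pi|) (idx : midx d) :
  'I_(unfold_dim d j) :=
  Ordinal (proj1 (code_props d (erefl #|block pi j|)) idx).

Lemma unfold_val (R : realType) k (d : 'I_k -> nat) (pi : {set {set 'I_k}}) (A : tensor R d)
  (y : forall j : 'I_#|pi|, 'I_(unfold_dim d j) -> R) :
  \sum_(mi : midx (@unfold_dim k d pi)) @unfold R k d pi A mi * \prod_(j < #|pi|) y j (mi j)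
  = \sum_(idx : midx d) A idx * \prod_(j < #|pi|) y j (codeo j idx).
Proof.
rewrite /unfold; under eq_bigr do rewrite big_distrl /=.
rewrite (exchange_big_dep xpredT) //=; apply: eq_bigr => idx _.
rewrite (big_pred1 ([ffun j : 'I_#|pi| => codeo j idx] : midx (@unfold_dim k d pi))).
  by congr (_ * _); apply: eq_bigr => j _; rewrite ffunE.
move=> mi /=; apply/forallP/eqP => [h|->].
  by apply/ffunP => j; rewrite ffunE; apply: val_inj => /=; rewrite (eqP (h j)).
by move=> j; rewrite ffunE.
Qed.

Lemma codeo_restr k (d : 'I_k -> nat) (z : midx d) (pi : {set {set 'I_k}}) (j : 'I_#|pi|) p :
  codeo j (restr z (block pi j) p) = codeo j p.
Proof.
apply: val_inj; rewrite /= /unfold_code; apply: eq_bigr => r rB.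
by rewrite restrE rB.
Qed.

Lemma codeo_inj k (d : 'I_k -> nat) (z : midx d) (pi : {set {set 'I_k}}) (j : 'I_#|pi|) :
  {in [pred p | inP z (block pi j) p] &, injective (@codeo k d pi j)}.
Proof.
move=> p q hp hq /(congr1 val) /= e.
have hinj := proj2 (code_props d (erefl #|block pi j|)) p q e.
rewrite -(restr_id hp) -(restr_id hq); apply/ffunP => i; rewrite !restrE.
by case: ifP => // /hinj.
Qed.

Lemma orth_block (R : realType) k (d : 'I_k -> nat) (z : midx d) (B : {set 'I_k}) r
  (a : 'I_r -> forall i : 'I_k, 'I_(d i) -> R) :
  B != set0 ->
  (forall (i : 'I_k) (n m : 'I_r), \sum_(t < d i) a n i t * a m i t = (n == m)%:R) ->
  forall n m, \sum_(p | inP z B p) (\prod_(i in B) a n i (p i)) * (\prod_(i in B) a m i (p i))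
     = (n == m)%:R.
Proof.
move=> B0 orth n m.
under eq_bigr do rewrite -big_split /=.
rewrite (sum_prod_block z B (fun i t => a n i t * a m i t)).
under eq_bigr do rewrite orth.
rewrite prodr_const; case: (n == m); first by rewrite expr1n.
by rewrite expr0n; move: B0; rewrite -cards_eq0 => /negPf ->.
Qed.

Lemma norm_block (R : realType) k (d : 'I_k -> nat) (z : midx d) (pi : {set {set 'I_k}})
  (j : 'I_#|pi|) (y : 'I_(unfold_dim d j) -> R) :
  \sum_t y t ^+ 2 = 1 ->
  \sum_(p | inP z (block pi j) p) y (codeo j p) ^+ 2 <= 1.
Proof.
move=> hy.
set Q := [pred p | inP z (block pi j) p].
have e : \sum_(t in [set codeo j x | x in Q]) y t ^+ 2 = \sum_(p in Q) y (codeo j p) ^+ 2.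
  by apply: big_imset; exact: codeo_inj.
have e2 : \sum_(p | inP z (block pi j) p) y (codeo j p) ^+ 2 = \sum_(p in Q) y (codeo j p) ^+ 2.
  by apply: eq_bigl => p; rewrite inE.
rewrite e2 -e -hy [X in _ <= X](bigID (mem [set codeo j x | x in Q])) /=.
rewrite lerDl sumr_ge0 // => t _; exact: sqr_ge0.
Qed.

Lemma amgm_prod (R : realType) (J : finType) (c : J -> R) (j0 j1 : J) :
  j0 != j1 -> (forall j, c j ^+ 2 <= 1) ->
  \prod_j c j <= (c j0 ^+ 2 + c j1 ^+ 2) / 2.
Proof.
move=> hj hc.
have hn j : `|c j| <= 1.
  by rewrite -(@expr_le1 _ 2) // -normrX ger0_norm ?sqr_ge0 ?hc.
apply: le_trans (ler_norm _) _.
rewrite normr_prod (bigD1 j0) //= (bigD1 j1) 1?eq_sym //=.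
have hr : \prod_(j | (j != j0) && (j != j1)) `|c j| <= 1.
  by apply: prodr_ile1 => j _; rewrite normr_ge0 hn.
have e0 : `|c j0| ^+ 2 = c j0 ^+ 2 by rewrite -normrX ger0_norm ?sqr_ge0.
have e1 : `|c j1| ^+ 2 = c j1 ^+ 2 by rewrite -normrX ger0_norm ?sqr_ge0.
have key (p q : R) : p * q <= (p ^+ 2 + q ^+ 2) / 2 by have := sqr_ge0 (p - q); nra.
rewrite -e0 -e1; apply: le_trans (key _ _).
by rewrite mulrA; apply: ler_piMr => //; apply: mulr_ge0.
Qed.

Lemma ub_unfold (R : realType) k (d : 'I_k -> nat) (z : midx d) (pi : {set {set 'I_k}})
  (A : tensor R d) r (lam : 'I_r -> R) (a : 'I_r -> forall i : 'I_k, 'I_(d i) -> R) (L : R)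
  (j0 j1 : 'I_#|pi|) :
  is_partition pi -> j0 != j1 ->
  (forall n, lam n <= L) -> (forall n, 0 <= lam n) -> 0 <= L ->
  (forall (i : 'I_k) (n m : 'I_r), \sum_(t < d i) a n i t * a m i t = (n == m)%:R) ->
  (forall idx : midx d, A idx = \sum_(n < r) lam n * \prod_(i < k) a n i (idx i)) ->
  forall y : forall j : 'I_#|pi|, 'I_(unfold_dim d j) -> R,
  (forall j, \sum_t y j t ^+ 2 = 1) ->
  \sum_(mi : midx (@unfold_dim k d pi)) @unfold R k d pi A mi * \prod_(j < #|pi|) y j (mi j) <= L.
Proof.
move=> hpi hj lamL lam0 L0 orth hA y hy.
rewrite unfold_val.
pose u (j : 'I_#|pi|) (p : midx d) := y j (codeo j p).
pose al (n : 'I_r) (j : 'I_#|pi|) (p : midx d) := \prod_(i in block pi j) a n i (p i).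
pose c (n : 'I_r) (j : 'I_#|pi|) := \sum_(p | inP z (block pi j) p) al n j p * u j p.
have eV : \sum_(idx : midx d) A idx * \prod_(j < #|pi|) y j (codeo j idx)
    = \sum_(n < r) lam n * \prod_(j < #|pi|) c n j.
  under eq_bigr do rewrite hA big_distrl /=.
  rewrite exchange_big /=; apply: eq_bigr => n _.
  under eq_bigr do rewrite -mulrA.
  rewrite -big_distrr /=; congr (_ * _).
  under eq_bigr do rewrite (prod_blocks _ hpi) -big_split /=.
  transitivity (\sum_(p | inP z (\bigcup_(j < #|pi|) block pi j) p)
                   \prod_(j < #|pi|) (al n j p * u j p)).
    by apply: eq_bigl => p; rewrite cover_all.
  rewrite (@prod_sum R k d z _ (fun j : 'I_#|pi| => block pi j) (fun (j : 'I_#|pi|) p => al n j p * u j p)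
              (index_enum _) (index_enum_uniq _) (block_disj hpi)) //.
  move=> j p; congr (_ * _).
    by apply: eq_bigr => i iB; rewrite restrE iB.
  by rewrite /u codeo_restr.
have hc n j : c n j ^+ 2 <= 1.
  have hb : \sum_(n0 < r) c n0 j ^+ 2 <= 1.
    apply: le_trans (norm_block z (hy j)).
    apply: (@bessel R _ (fun p => inP z (block pi j) p) r (fun n p => al n j p) (u j)).
    exact: orth_block (block_ne0 hpi j) orth.
  apply: le_trans hb; rewrite (bigD1 n) //= lerDl; apply: sumr_ge0 => m _.
  exact: sqr_ge0.
have hs j : \sum_(n < r) c n j ^+ 2 <= 1.
  apply: le_trans (norm_block z (hy j)).
  apply: (@bessel R _ (fun p => inP z (block pi j) p) r (fun n p => al n j p) (u j)).
  exact: orth_block (block_ne0 hpi j) orth.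
rewrite eV.
apply: (@le_trans _ _ (\sum_(n < r) L * ((c n j0 ^+ 2 + c n j1 ^+ 2) / 2))).
  apply: ler_sum => n _.
  apply: le_trans (ler_wpM2l (lam0 n) (amgm_prod hj (hc n))) _.
  apply: ler_wpM2r; last exact: lamL.
  by apply: divr_ge0 => //; apply: addr_ge0; apply: sqr_ge0.
rewrite -big_distrr /= -big_distrl /= big_split /=.
have := hs j0; have := hs j1; nra.
Qed.

Lemma embed (R : realType) k (d : 'I_k -> nat) (z : midx d) (pi : {set {set 'I_k}})
  (A : tensor R d) (x : forall n : 'I_k, 'I_(d n) -> R) :
  is_partition pi -> (forall n, \sum_(t < d n) x n t ^+ 2 = 1) ->
  exists y : forall j : 'I_#|pi|, 'I_(unfold_dim d j) -> R,
    (forall j, \sum_t y j t ^+ 2 = 1) /\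
    \sum_(idx : midx d) A idx * \prod_(n < k) x n (idx n) =
    \sum_(mi : midx (@unfold_dim k d pi)) @unfold R k d pi A mi * \prod_(j < #|pi|) y j (mi j).
Proof.
move=> hpi hx.
pose y := (fun (j : 'I_#|pi|) t => \sum_(p | inP z (block pi j) p && (codeo j p == t))
                     \prod_(i in block pi j) x i (p i)).
exists y; split.
  move=> j; rewrite /y /=.
  have hinj : {in (fun p => inP z (block pi j) p) &, injective (@codeo k d pi j)}.
    by move=> p q hp hq; apply: (@codeo_inj k d z pi j); [exact: hp|exact: hq].
  rewrite (@sum_fiber R _ _ (fun p => inP z (block pi j) p) (@codeo k d pi j)
             (fun p => \prod_(i in block pi j) x i (p i)) (fun t => t ^+ 2) hinj) ?expr0n //.
  under eq_bigr do rewrite -prodrXl.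
  rewrite (sum_prod_block z _ (fun i t => x i t ^+ 2)).
  by rewrite big1 // => i _; rewrite hx.
rewrite unfold_val; apply: eq_bigr => idx _; congr (_ * _).
rewrite (prod_blocks _ hpi); apply: eq_bigr => j _; rewrite /y.
rewrite (big_pred1 (restr z (block pi j) idx)).
  by apply: eq_bigr => i iB; rewrite restrE iB.
move=> p /=; apply/andP/eqP => [[hp /eqP e]|->].
  apply: (@codeo_inj k d z pi j) => //; first exact: inP_restr.
  by rewrite e codeo_restr.
by rewrite inP_restr codeo_restr.
Qed.

Lemma full_fact (R : realType) k (d : 'I_k -> nat) (z : midx d) (g : forall i, 'I_(d i) -> R) :
  \sum_(idx : midx d) \prod_(i < k) g i (idx i) = \prod_(i < k) \sum_t g i t.
Proof.
transitivity (\sum_(p | inP z setT p) \prod_(i in [set: 'I_k]) g i (p i)).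
  apply: eq_big => [p|p _]; last by apply: eq_bigl => i; rewrite in_setT.
  by apply/esym/forallP => i; rewrite in_setT.
rewrite (sum_prod_block z [set: 'I_k] g); apply: eq_bigl => i; by rewrite in_setT.
Qed.

Lemma sum_empty (R : realType) n (f : 'I_n -> R) : n = 0%N -> \sum_(t < n) f t = 0.
Proof. by move=> hn; subst n; rewrite big_ord0. Qed.

Lemma two_blocks k (pi : {set {set 'I_k}}) :
  (0 < k)%N -> is_partition pi -> pi != one_part k -> (1 < #|pi|)%N.
Proof.
move=> kpos hpi hne.
have [j _] := block_cover hpi (Ordinal kpos).
have h0 : (0 < #|pi|)%N by apply: leq_ltn_trans (ltn_ord j).
rewrite ltn_neqAle h0 andbT eq_sym; apply/negP => /cards1P [B hB].
move: hne; rewrite hB /one_part; case/negP; apply/eqP; congr [set _].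
by rewrite -(cover1 B) -hB; have /and3P [/eqP -> _ _] := hpi.
Qed.

Lemma main_case (R : realType) k (d : 'I_k -> nat) (z : midx d) (A : tensor R d)
  (pi : {set {set 'I_k}}) :
  (0 < k)%N -> OD0 A -> is_partition pi -> pi != one_part k ->
  spectral_norm (@unfold R k d pi A) = spectral_norm A.
Proof.
move=> kpos [r [lam [a [hdec hpos horth hA]]]] hpi hne.
have h2 := two_blocks kpos hpi hne.
pose j0 : 'I_#|pi| := Ordinal (ltnW h2).
pose j1 : 'I_#|pi| := Ordinal h2.
have hj : j0 != j1 by apply/eqP => /(congr1 val).
have [L [hL0 [hlamL [xw [hxw hval]]]]] : exists L, 0 <= L /\ (forall n, lam n <= L) /\
    exists x : forall n : 'I_k, 'I_(d n) -> R, (forall n, \sum_(t < d n) x n t ^+ 2 = 1) /\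
      L = \sum_(idx : midx d) A idx * \prod_(n < k) x n (idx n).
  case: r lam a hdec hpos horth hA => [|r] lam a hdec hpos horth hA.
    exists 0; split => //; split; first by case.
    exists (fun n t => (t == z n)%:R); split.
      move=> n; rewrite (bigD1 (z n)) //= eqxx expr1n big1 ?addr0 // => t /negPf ->.
      by rewrite expr2 mulr0.
    by apply/esym; apply: big1 => idx _; rewrite hA big_ord0 mul0r.
  exists (lam ord0); split; first exact: hpos.
  split; first by move=> n; apply: hdec.
  exists (a ord0); split.
    by move=> n; under eq_bigr do rewrite expr2; rewrite horth eqxx.
  apply/esym.
  under eq_bigr do rewrite hA big_distrl /=.
  rewrite exchange_big /= (bigD1 ord0) //= [X in _ + X]big1 ?addr0.
    under eq_bigr do rewrite -mulrA -big_split /=.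
    rewrite -big_distrr /= (full_fact z (fun i t => a ord0 i t * a ord0 i t)).
    by rewrite big1 ?mulr1 // => i _; rewrite horth eqxx.
  move=> n /negPf hn.
  under eq_bigr do rewrite -mulrA -big_split /=.
  rewrite -big_distrr /= (full_fact z (fun i t => a n i t * a ord0 i t)).
  by rewrite (bigD1 (Ordinal kpos)) //= horth hn mul0r mulr0.
have ub := ub_unfold z hpi hj hlamL hpos hL0 horth hA.
transitivity L.
  apply: sup_eq.
    have [y [hy e]] := embed z A hpi hxw.
    by exists y; split => //; rewrite hval e.
  by move=> s [y [hy ->]]; exact: ub y hy.
apply/esym; apply: sup_eq.
  by exists xw; split.
move=> s [x [hx ->]]; have [y [hy ->]] := embed z A hpi hx.
exact: ub y hy.
Qed.

Theorem corollary5p6 (R : realType) (k : nat) (d : 'I_k -> nat)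
  (A : tensor R d) :
  OD0 A ->
  forall pi : {set {set 'I_k}}, is_partition pi -> pi != one_part k ->
    spectral_norm (@unfold R k d pi A) = spectral_norm A.
Proof.
move=> hod pi hpi hne.
have [k0|kpos] := posnP k.
  subst k.
  have B0 : forall B : {set 'I_0}, B = set0 by move=> B; apply/setP => -[].
  have pi0 : #|pi| = 0%N.
    apply/eqP; rewrite cards_eq0; apply/eqP/setP => B; rewrite in_set0 (B0 B).
    by have /and3P [_ _ /negPf ->] := hpi.
  have ej : forall (j : 'I_#|pi|), False by move=> j; case: j => j; rewrite pi0 ltn0.
  transitivity (\sum_(idx : midx d) A idx).
    apply: sup_eq.
      exists (fun j _ => 0); split; first by move=> j; case: (ej j).
      rewrite (@unfold_val R 0 d pi A (fun _ _ => 0)); apply: eq_bigr => idx _.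
      by rewrite big1 ?mulr1 // => j; case: (ej j).
    move=> s [y [hy ->]]; rewrite unfold_val (eq_bigr A) //.
    by move=> idx _; rewrite big1 ?mulr1 // => j; case: (ej j).
  apply/esym; apply: sup_eq.
    exists (fun n _ => 0); split; first by case.
    by apply: eq_bigr => idx _; rewrite big_ord0 mulr1.
  move=> s [x [hx ->]]; rewrite (eq_bigr A) //.
  by move=> idx _; rewrite big_ord0 mulr1.
case: (boolP [forall i, (0 < d i)%N]) => [/forallP hd|].
  exact: (main_case ([ffun i => Ordinal (hd i)] : midx d) kpos hod hpi hne).
rewrite negb_forall => /existsP [i0]; rewrite -eqn0Ngt => /eqP hd0.
transitivity (0 : R).
  have [j ij] := block_cover hpi i0.
  have hdim : unfold_dim d j = 0%N by rewrite /unfold_dim (bigD1 i0) //= hd0 mul0n.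
  rewrite -[RHS](sup0 R) /spectral_norm; congr sup.
  apply: boolp.funext => s; apply: boolp.propext; split => // -[y [hy _]].
  by move: (hy j); rewrite sum_empty // => /esym/eqP; rewrite oner_eq0.
rewrite -[LHS](sup0 R) /spectral_norm; congr sup.
apply: boolp.funext => s; apply: boolp.propext; split => // -[x [hx _]].
by move: (hx i0); rewrite sum_empty // => /esym/eqP; rewrite oner_eq0.
Qed.
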